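(* Let $X$ be a Banach space and let $h$ be a metric functional of $X$ (with base point $0$). Then there is a continuous linear functional $f$ on $X$ of norm at most $1$ such that $f(x)\leq h(x)$ for all $x\in X$.
   Context: For $y\in X$ let $h_y(x)=\|x-y\|-\|y\|$. Endow $\mathbb{R}^X$ with the topology of pointwise convergence. A metric functional of $X$ is an element of the closure of $\{h_y: y\in X\}$ in $\mathbb{R}^X$. *)

(* Defs.v *)
From HB Require Import structures.
From mathcomp Require Import all_boot all_order all_algebra.
From mathcomp Require Import all_classical all_reals all_analysis.
Set Implicit Arguments. Unset Strict Implicit. Unset Printing Implicit Defensive.
Import Order.TTheory GRing.Theory Num.Theory.
Import numFieldNormedType.Exports.
Local Open Scope classical_set_scope.
Local Open Scope ring_scope.

Definition hfun {R : realType} {X : normedModType R} (y : X) : {ptws X -> R} :=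
  fun x : X => `|x - y| - `|y|.

Definition metric_functional {R : realType} {X : normedModType R}
    (h : {ptws X -> R}) : Prop :=
  closure (range (@hfun R X)) h.

(* Main.v *)
Require Import Defs.
From HB Require Import structures.
From mathcomp Require Import all_boot all_order all_algebra.
From mathcomp Require Import all_classical all_reals all_analysis.
From mathcomp Require Import lra.
Import Order.TTheory GRing.Theory Num.Theory.
Import numFieldNormedType.Exports.
Local Open Scope classical_set_scope.
Local Open Scope ring_scope.
From mathcomp Require Import ring.

Section S.
Context {R : realType} {X : normedModType R}.

Lemma closure_ineq (A : set {ptws X -> R}) (P : {ptws X -> R} -> R) :
  continuous P -> (forall g, A g -> 0 <= P g) -> forall h, closure A h -> 0 <= P h.
Proof.
move=> cP AP h hA.
have cC : closed (P @^-1` [set x : R | 0 <= x]).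
  apply: preimage_closed; first by move=> x _; exact: cP.
  exact: closed_ge.
have := closureS (fun k (Ak : A k) => (AP k Ak : (P @^-1` [set x : R | 0 <= x]) k)).
move=> /(_ h hA); rewrite -(closure_id _).1 //.
Qed.

Lemma ev_cont (a : X) : continuous (fun g : {ptws X -> R} => g a).
Proof. exact: (@proj_continuous X (fun _ => R) a). Qed.

End S.

Section S2.
Context {R : realType} {X : normedModType R}.

Lemma ev_cont' (a : X) : continuous (fun g : {ptws X -> R} => g a).
Proof. exact: (@proj_continuous X (fun _ => R) a). Qed.

Lemma mf_lip (h : {ptws X -> R}) : metric_functional h ->
  forall a b : X, h a - h b <= `|a - b|.
Proof.
move=> mh a b.
suff : 0 <= `|a - b| - (h a - h b) by rewrite subr_ge0.
apply: (@closure_ineq R X _ (fun g => `|a - b| - (g a - g b)) _ _ h mh).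
- move=> g; exact: (cvgB (cvg_cst `|a - b|) (cvgB (ev_cont' a g) (ev_cont' b g))).
- move=> _ [y _ <-]; rewrite subr_ge0 /hfun.
  rewrite opprB addrA subrK.
  have := ler_distD b a y; rewrite distrC; lra.
Qed.

Lemma mf_0 (h : {ptws X -> R}) : metric_functional h -> h 0 = 0.
Proof.
move=> mh; apply/eqP; rewrite eq_le; apply/andP; split.
  rewrite -oppr_ge0; apply: (@closure_ineq R X _ (fun g => - g 0) _ _ h mh).
  - move=> g; exact: (cvgN (ev_cont' 0 g)).
  - by move=> _ [y _ <-]; rewrite /hfun sub0r normrN subrr oppr0.
apply: (@closure_ineq R X _ (fun g => g 0) _ _ h mh).
- move=> g; exact: ev_cont'.
- by move=> _ [y _ <-]; rewrite /hfun sub0r normrN subrr.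
Qed.

Lemma mf_conv (h : {ptws X -> R}) : metric_functional h ->
  forall (l : R) (a b : X), 0 <= l -> l <= 1 ->
  h (l *: a + (1 - l) *: b) <= l * h a + (1 - l) * h b.
Proof.
move=> mh l a b l0 l1.
rewrite -subr_ge0; apply: (@closure_ineq R X _
  (fun g => l * g a + (1 - l) * g b - g (l *: a + (1 - l) *: b)) _ _ h mh).
- move=> g; exact: (cvgB (cvgD (cvgM (cvg_cst l) (ev_cont' a g))
     (cvgM (cvg_cst (1 - l)) (ev_cont' b g))) (ev_cont' (l *: a + (1 - l) *: b) g)).
- move=> _ [y _ <-]; rewrite subr_ge0 /hfun.
  have -> : l *: a + (1 - l) *: b - y = l *: (a - y) + (1 - l) *: (b - y).
    by rewrite !scalerBr addrACA -opprD -scalerDl (addrC l) subrK scale1r.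
  suff: `|l *: (a - y) + (1 - l) *: (b - y)| <= l * `|a - y| + (1 - l) * `|b - y| by lra.
  apply: le_trans (ler_normD _ _) _.
  by rewrite !normrZ (ger0_norm l0) ger0_norm ?subr_ge0.
Qed.

End S2.
Section HahnBanach.
Context {R : realType} {V : lmodType R} (p : V -> R).
Hypothesis psub : forall x y, p (x + y) <= p x + p y.
Hypothesis phom : forall x t, 0 < t -> p (t *: x) = t * p x.

Definition good (G : set (V * R)) :=
  [/\ forall x r s, G (x,r) -> G (x,s) -> r = s,
      forall a x y r s, G (x,r) -> G (y,s) -> G (a *: x + y, a * r + s) &
      forall x r, G (x,r) -> r <= p x].

Lemma p0 : p 0 = 0.
Proof.
have := @phom 0 2 (ltr0Sn R 1); rewrite scaler0 => e; lra.
Qed.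

Section GoodFacts.
Variable A : set (V * R).
Hypothesis gA : good A.
Hypothesis A00 : A (0, 0).

Lemma goodZ a x r : A (x, r) -> A (a *: x, a * r).
Proof. by case: gA => _ cl _ Ax; have := cl a _ _ _ _ Ax A00; rewrite addr0 addr0. Qed.

Lemma goodD x y r s : A (x, r) -> A (y, s) -> A (x + y, r + s).
Proof. by case: gA => _ cl _ Ax Ay; have := cl 1 _ _ _ _ Ax Ay; rewrite scale1r mul1r. Qed.

End GoodFacts.

Lemma good00 A x r : good A -> A (x, r) -> A (0, 0).
Proof.
case=> _ cl _ Ax; have := cl (-1) _ _ _ _ Ax Ax.
by rewrite scaleN1r addNr mulN1r addNr.
Qed.

Lemma good_chain (F : set (set (V * R))) : F `<=` good -> total_on F subset ->
  good (\bigcup_(X in F) X).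
Proof.
move=> Fg tot; split.
- move=> x r s [G1 FG1 G1x] [G2 FG2 G2x].
  have [sub|sub] := tot _ _ FG1 FG2.
    by case: (Fg _ FG2) => fn _ _; apply: (fn x); first exact: sub.
  by case: (Fg _ FG1) => fn _ _; apply: (fn x) => //; exact: sub.
- move=> a x y r s [G1 FG1 G1x] [G2 FG2 G2x].
  have [sub|sub] := tot _ _ FG1 FG2.
    exists G2 => //; case: (Fg _ FG2) => _ cl _; apply: cl => //; exact: sub.
  exists G1 => //; case: (Fg _ FG1) => _ cl _; apply: cl => //; exact: sub.
- by move=> x r [G FG Gx]; case: (Fg _ FG) => _ _; apply.
Qed.


Lemma good_ext (A : set (V * R)) : good A -> A (0, 0) ->
  (forall B, A `<` B -> ~ good B) -> forall x0, exists r, A (x0, r).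
Proof.
move=> gA A00 maxA x0; apply: contrapT => nx0.
have nA r : ~ A (x0, r) by move=> Ar; apply: nx0; exists r.
case: (gA) => fnA clA dA.
pose L := [set v | exists y s, A (y, s) /\ v = s - p (y - x0)].
have L0 : L (0 - p (0 - x0)) by exists 0, 0.
have Lub z u : A (z, u) -> ubound L (p (z + x0) - u).
  move=> Azu _ [y [s [Ays ->]]].
  have := dA _ _ (goodD _ gA _ _ _ _ Ays Azu).
  have := psub (y - x0) (z + x0).
  have -> : y - x0 + (z + x0) = y + z by rewrite addrCA subrK addrC.
  lra.
pose c := sup L.
have ci y s : A (y, s) -> s - p (y - x0) <= c.
  move=> Ays; apply: ub_le_sup; last by exists y, s.
  by exists (p (0 + x0) - 0); apply: Lub.
have cii z u : A (z, u) -> c <= p (z + x0) - u.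
  by move=> Azu; apply: ge_sup; [exists (0 - p (0 - x0)) | apply: Lub].
pose B := [set q | exists t y s, A (y, s) /\ q = (t *: x0 + y, t * c + s)].
apply: (maxA B).
  split.
    move=> [y s] Ays; exists 0, y, s; split => //.
    by rewrite scale0r add0r mul0r add0r.
  move=> AB; apply: (nA c); apply: AB; exists 1, 0, 0; split => //.
  by rewrite scale1r addr0 mul1r addr0.
split.
- move=> x r r' [t [y [s [Ays [-> ->]]]]] [t' [y' [s' [Ays' [ex ->]]]]].
  have tt' : t = t'.
    apply: contrapT => /eqP; rewrite -subr_eq0 => ne.
    apply: (nA ((t - t')^-1 * (s' - s))).
    have -> : x0 = (t - t')^-1 *: (y' - y).
      apply: (scalerI ne); rewrite scalerA divff // scale1r.
      have ey : y' = t *: x0 + y - t' *: x0 by rewrite ex addrAC subrr add0r.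
      by rewrite scalerBl ey addrAC addrK.

    apply: goodZ => //; apply: (goodD _ gA) => //; rewrite -scaleN1r -(mulN1r s).
    exact: goodZ.
  move: ex; rewrite -tt' => /addrI ey; rewrite -ey in Ays'.
  by rewrite (fnA _ _ _ Ays Ays').
- move=> a x y r s [t [y1 [s1 [A1 [-> ->]]]]] [t' [y2 [s2 [A2 [-> ->]]]]].
  exists (a * t + t'), (a *: y1 + y2), (a * s1 + s2); split; first exact: clA.
  congr (_, _).
    by rewrite scalerDr scalerA addrACA scalerDl.
  lra.
- move=> x r [t [y [s [Ays [-> ->]]]]].
  have [tgt0|tlt0|->] := ltgtP t 0.
  + have tn : 0 < - t by rewrite oppr_gt0.
    have := ci _ _ (goodZ _ gA A00 (- t)^-1 _ _ Ays).
    have -> : (- t)^-1 *: y - x0 = (- t)^-1 *: (t *: x0 + y).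
      by rewrite scalerDr scalerA invrN mulNr mulVf ?ltr0_neq0 // scaleN1r addrC.
    rewrite phom ?invr_gt0 //; try lra.
    move=> h1; have := ler_wpM2l (ltW tn) h1.
    rewrite mulrBr !mulrA mulfV ?lt0r_neq0 // !mul1r; lra.
  + have := cii _ _ (goodZ _ gA A00 t^-1 _ _ Ays).
    have -> : t^-1 *: y + x0 = t^-1 *: (t *: x0 + y).
      by rewrite scalerDr scalerA mulVf ?lt0r_neq0 // scale1r addrC.
    rewrite phom ?invr_gt0 //; try lra.
    move=> h1; have := ler_wpM2l (ltW tlt0) h1.
    rewrite mulrBr !mulrA mulfV ?lt0r_neq0 // !mul1r; lra.
  + by rewrite scale0r add0r mul0r add0r; apply: dA.
Qed.


Lemma hahn_banach : exists f : V -> R,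
  (forall a x y, f (a *: x + y) = a * f x + f y) /\ (forall x, f x <= p x).
Proof.
have [A [gA maxA]] := @Zorn_bigcup _ good good_chain.
have A00 : A (0, 0).
  apply: contrapT => nA.
  have A0 : A = set0.
    by apply/seteqP; split => // -[x r] Ax; apply: nA; exact: good00 Ax.
  apply: (maxA [set (0, 0)]).
    rewrite A0; split; first by move=> ? /=.
    by move=> /(_ (0, 0) erefl).
  split.
  - by move=> x r s /= [_ ->] [_ ->].
  - move=> a x y r s /= [-> ->] [-> ->]; congr (_, _).
      by rewrite scaler0 addr0.
    by rewrite mulr0 addr0.
  - by move=> x r /= [-> ->]; rewrite p0.
have /choice [f Hf] := good_ext _ gA A00 maxA.
case: gA => fn cl dA.
exists f; split; last by move=> x; exact: dA.
move=> a x y; apply: (fn (a *: x + y)); first exact: Hf.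
exact: cl.
Qed.

End HahnBanach.
Section PP.
Context {R : realType} {X : normedModType R} (h : X -> R).
Hypothesis hLip : forall a b : X, h a - h b <= `|a - b|.
Hypothesis h0 : h 0 = 0.
Hypothesis hconv : forall (l : R) (a b : X), 0 <= l -> l <= 1 ->
  h (l *: a + (1 - l) *: b) <= l * h a + (1 - l) * h b.

Definition Sq (x : X) := [set v : R | exists2 t, 0 < t & v = h (t *: x) / t].
Definition pp (x : X) := inf (Sq x).

Lemma Sq_lb x : lbound (Sq x) (- `|x|).
Proof.
move=> _ [t t0 ->]; rewrite ler_pdivlMr //.
have := hLip 0 (t *: x); rewrite h0 !sub0r normrN normrZ gtr0_norm //; lra.
Qed.

Lemma Sq_hlb x : has_lbound (Sq x).
Proof. by exists (- `|x|); exact: Sq_lb. Qed.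

Lemma Sq_ne x : Sq x !=set0.
Proof. by exists (h (1 *: x) / 1); exists 1. Qed.

Lemma pp_le x t : 0 < t -> pp x <= h (t *: x) / t.
Proof. by move=> t0; apply: ge_inf; [exact: Sq_hlb | exists t]. Qed.

Lemma pp_h x : pp x <= h x.
Proof. by have := pp_le x 1 ltr01; rewrite scale1r divr1. Qed.

Lemma pp_hom1 x l : 0 < l -> l * pp x <= pp (l *: x).
Proof.
move=> l0; apply: lb_le_inf; first exact: Sq_ne.
move=> _ [t t0 ->]; rewrite scalerA.
have tl : 0 < t * l by rewrite mulr_gt0.
have := pp_le x _ tl.
have -> : h ((t * l) *: x) / t = l * (h ((t * l) *: x) / (t * l)).
  by field; rewrite !gt_eqF.
move=> H; by rewrite ler_wpM2l // ltW.
Qed.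

Lemma pp_hom x l : 0 < l -> pp (l *: x) = l * pp x.
Proof.
move=> l0; apply/eqP; rewrite eq_le pp_hom1 // andbT.
have H : l^-1 * pp (l *: x) <= pp (l^-1 *: (l *: x)).
  by apply: pp_hom1; rewrite invr_gt0.
rewrite scalerA mulVf ?gt_eqF // scale1r in H.
have := ler_wpM2l (ltW l0) H; rewrite mulrA mulfV ?gt_eqF // mul1r; apply.
Qed.

Lemma pp_key x y t1 t2 : 0 < t1 -> 0 < t2 ->
  pp (x + y) <= h (t1 *: x) / t1 + h (t2 *: y) / t2.
Proof.
move=> t10 t20.
have t12 : 0 < t1 + t2 by rewrite addr_gt0.
pose l := t2 / (t1 + t2); pose s := t1 * t2 / (t1 + t2).
have s0 : 0 < s by rewrite /s divr_gt0 ?mulr_gt0.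
have l0 : 0 <= l by rewrite /l divr_ge0 ?ltW.
have l1 : l <= 1 by rewrite /l ler_pdivrMr // mul1r lerDr ltW.
have e : l *: (t1 *: x) + (1 - l) *: (t2 *: y) = s *: (x + y).
  rewrite !scalerA scalerDr; congr (_ *: _ + _ *: _); rewrite /l /s.
    by field; rewrite gt_eqF.
  by field; rewrite gt_eqF.
have := hconv l (t1 *: x) (t2 *: y) l0 l1; rewrite e => H.
apply: le_trans (pp_le _ _ s0) _.
have si : 0 <= s^-1 by rewrite invr_ge0 ltW.
have := ler_wpM2r si H.
move/le_trans; apply.
rewrite le_eqVlt; apply/orP; left; apply/eqP; rewrite /l /s.
field; rewrite !gt_eqF //.
Qed.

Lemma pp_sub x y : pp (x + y) <= pp x + pp y.
Proof.
suff : pp (x + y) - pp y <= pp x by lra.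
apply: lb_le_inf; first exact: Sq_ne.
move=> _ [t1 t10 ->].
suff : pp (x + y) - h (t1 *: x) / t1 <= pp y by lra.
apply: lb_le_inf; first exact: Sq_ne.
move=> _ [t2 t20 ->].
have := pp_key x y _ _ t10 t20; lra.
Qed.

End PP.

Section MkLin.
Context {R : realType} {X : lmodType R} (f : X -> R^o) (lf : linear f).
Definition mklin (lf0 : linear f) : X -> R^o := f.
HB.instance Definition _ := GRing.isLinear.Build R X R^o *:%R (mklin lf) lf.
End MkLin.


Theorem lemma3p1 (R : realType) (X : completeNormedModType R)
    (h : {ptws X -> R}) :
  metric_functional h ->
  exists f : {linear X -> R^o},
    continuous f /\ (forall x : X, `|f x| <= `|x|) /\ (forall x : X, f x <= h x).
Proof.
move=> mh.
have hLip := mf_lip h mh; have h0 := mf_0 h mh; have hconv := mf_conv h mh.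
have [f [lf fp]] := hahn_banach (pp h) (pp_sub h hLip h0 hconv) (pp_hom h hLip h0).
have fh x : f x <= h x := le_trans (fp x) (pp_h h hLip h0 x).
have lin : linear (f : X -> R^o).
  by move=> a x y; rewrite lf.
have f0 : f 0 = 0.
  have := lf 1 0 0; rewrite scaler0 addr0 mul1r; lra.
have fN x : f (- x) = - f x.
  by have := lf (-1) x 0; rewrite addr0 f0 scaleN1r addr0 mulN1r.
have fn x : `|f x| <= `|x|.
  rewrite ler_norml; apply/andP; split.
    have := fh (- x); have := hLip (- x) 0; rewrite h0 !subr0 normrN fN; lra.
  have := fh x; have := hLip x 0; rewrite h0 !subr0; lra.
exists (mklin (f : X -> R^o) lin); split; last split.
- apply: bounded_linear_continuous; apply/bounded_funP => r.
  exists r => x xr; exact: le_trans (fn x) xr.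
- exact: fn.
- exact: fh.
Qed.
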